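(* Let $p$ be an odd prime and $r\ge2$ even. Then $D_{S(p^r)^*}\le5$.
   Context: For a natural number $m$, $\mathbb Z_m=\mathbb Z/m\mathbb Z$, $S(m)=\{x^2:x\in\mathbb Z_m\}$, $S(m)^*=S(m)\setminus\{0\}$. For $A\subseteq\mathbb Z_m$, a sequence $(y_1,\dots,y_t)$ ($t\ge1$) is an $A$-weighted zero-sum sequence if there exist $a_i\in A$ with $\sum a_iy_i=0$; a sequence has an $A$-weighted zero-sum subsequence if some nonempty subsequence is one. $D_A(m)$ is the least positive integer $t$ such that every sequence of length $t$ in $\mathbb Z_m$ has an $A$-weighted zero-sum subsequence; $D_{S(m)^*}=D_{S(m)^*}(m)$. *)

(* Defs.v *)
From mathcomp Require Import all_boot all_algebra.
Set Implicit Arguments. Unset Strict Implicit. Unset Printing Implicit Defensive.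
Import GRing.Theory.
Local Open Scope ring_scope.

(* 'Z_m is Z/mZ for m >= 2 (used only with m = p^r >= 9). *)

Definition Sq (m : nat) : {set 'Z_m} := [set x ^+ 2 | x : 'Z_m].
Definition Sqstar (m : nat) : {set 'Z_m} := Sq m :\ 0.

Definition has_wzs_subseq (m : nat) (A : {set 'Z_m}) (t : nat)
    (y : 'I_t -> 'Z_m) : Prop :=
  exists I : {set 'I_t}, I != set0 /\
    exists a : 'I_t -> 'Z_m,
      (forall i, i \in I -> a i \in A) /\ \sum_(i in I) a i * y i = 0.

Definition all_have_wzs (m : nat) (A : {set 'Z_m}) (t : nat) : Prop :=
  forall y : 'I_t -> 'Z_m, has_wzs_subseq A y.

Definition is_DA (m : nat) (A : {set 'Z_m}) (t : nat) : Prop :=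
  (0 < t)%N /\ all_have_wzs A t /\
  forall t', (0 < t')%N -> all_have_wzs A t' -> (t <= t')%N.

(* Main.v *)
Require Import Defs.
From Stdlib Require Import Classical_Prop.
From mathcomp Require Import all_boot all_algebra zify ring.
Import GRing.Theory.

Section Core.
Local Open Scope ring_scope.

Lemma Fp_nat0 (p n : nat) : prime p -> ((n%:R : 'F_p) == 0) = (p %| n)%N.
Proof. by move=> pp; rewrite (dvdn_pcharf (pchar_Fp pp)). Qed.

Lemma sq_card (p : nat) : prime p -> odd p ->
  ((p./2).+1 <= #|[set x ^+ 2 | x : 'F_p]|)%N.
Proof.
move=> pp op.
have hp : (p = 2 * p./2 + 1)%N by move: (odd_double_half p); rewrite op doubleE; lia.
have p1 := prime_gt1 pp.
pose f := fun k : 'I_((p./2).+1) => ((k : nat)%:R : 'F_p) ^+ 2.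
have fi : injective f.
  move=> i j /eqP; rewrite /f -subr_eq0 subr_sqr mulf_eq0 => /orP[].
    rewrite subr_eq0 => /eqP/(congr1 val); rewrite /= !val_Fp_nat //.
    have ip := ltn_ord i; have jp := ltn_ord j.
    rewrite !modn_small; first by move=> h; apply: val_inj.
    1,2: lia.
  rewrite -natrD Fp_nat0 // => hd.
  have ip := ltn_ord i; have jp := ltn_ord j.
  have : (i + j < p)%N by lia.
  case: (posnP (i + j)) => [h0 _|hpos hlt]; first by apply: val_inj => /=; lia.
  by move: (dvdn_leq hpos hd); lia.
have -> : (p./2).+1 = #|f @: [set: 'I_((p./2).+1)]| by rewrite card_imset // cardsT card_ord.
apply: subset_leq_card; apply/subsetP => x /imsetP[k _ ->]; apply/imsetP; by exists (k%:R).
Qed.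

Lemma core (p : nat) (z1 z2 z3 : 'F_p) : prime p -> odd p -> z1 != 0 -> z2 != 0 ->
  exists s1 s2 : 'F_p, s1 ^+ 2 * z1 + s2 ^+ 2 * z2 + z3 = 0.
Proof.
move=> pp op n1 n2.
set SQ := [set x ^+ 2 | x : 'F_p].
have cS : ((p./2).+1 <= #|SQ|)%N := sq_card p pp op.
set A := (fun x => x * z1) @: SQ.
set B := (fun x => - z3 - x * z2) @: SQ.
have cA : #|A| = #|SQ| by rewrite card_imset //; exact: mulIf.
have cB : #|B| = #|SQ|.
  rewrite card_imset // => x y /= /addrI /oppr_inj; exact: mulIf.
have : (0 < #|A :&: B|)%N.
  have := cardsU A B; have : (#|A :|: B| <= #|[set: 'F_p]|)%N := subset_leq_card (subsetT _); rewrite cardsT card_Fp //.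
  have hp : (p = 2 * p./2 + 1)%N by move: (odd_double_half p); rewrite op doubleE; lia.
  move=> h1 h3; rewrite cA cB in h3; move: cS h1 h3 hp; clear; lia.
rewrite card_gt0 => /set0Pn[x /setIP[/imsetP[a /imsetP[s1 _ ->] ->] /imsetP[b /imsetP[s2 _ ->] e]]].
exists s1, s2; rewrite e; ring.
Qed.
End Core.

Lemma core_nat (p z1 z2 z3 : nat) : prime p -> odd p -> ~~ (p %| z1) -> ~~ (p %| z2) ->
  exists s1 s2 : nat, p %| s1 ^ 2 * z1 + s2 ^ 2 * z2 + z3.
Proof.
move=> pp op h1 h2.
have [||s1 [s2 e]] := @core p (z1%:R)%R (z2%:R)%R (z3%:R)%R pp op; try by rewrite Fp_nat0.
exists (val s1), (val s2).
rewrite -(Fp_nat0 _ _ pp) !natrD !natrM !natr_Zp; by apply/eqP; rewrite -e !expr2.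
Qed.

Lemma lift_nat (p t u : nat) : prime p -> ~~ (p %| u) -> exists c, p %| t + c * u.
Proof.
move=> pp hu.
have u0 : ((u%:R : 'F_p) != 0)%R by rewrite Fp_nat0.
exists (val ((- t%:R / u%:R) : 'F_p)%R).
by rewrite -(Fp_nat0 _ _ pp) natrD natrM natr_Zp mulfVK // addrN.
Qed.

Lemma Zm_nat0 (m n : nat) : 1 < m -> ((n%:R : 'Z_m) == 0)%R = (m %| n).
Proof. by move=> m1; rewrite /dvdn -(val_Zp_nat m1). Qed.

Definition W (p r s : nat) : 'Z_(p ^ r) := ((p ^ (r - 2) * s ^ 2)%:R)%R.

Lemma pr_split (p r : nat) : 2 <= r -> p ^ r = p ^ (r - 2) * p * p.
Proof. by move=> r2; rewrite -!expnSr; congr (_ ^ _); lia. Qed.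

Lemma m_gt1 (p r : nat) : prime p -> 2 <= r -> 1 < p ^ r.
Proof.
move=> pp r2; rewrite (@pr_split p r r2); have := prime_gt1 pp.
have : 0 < p ^ (r - 2) by rewrite expn_gt0 prime_gt0.
nia.
Qed.

Lemma WS (p r s : nat) : 2 <= r -> ~~ odd r -> W p r s \in Sq (p ^ r).
Proof.
move=> r2 er; apply/imsetP; exists ((p ^ (r./2 - 1) * s)%:R)%R => //.
rewrite /W -natrX expnMn -expnM; congr ((_ * _)%:R)%R; congr (_ ^ _).
move: (odd_double_half r); rewrite (negbTE er) doubleE; lia.
Qed.

Lemma W0 (p r s : nat) : prime p -> 2 <= r -> ~~ (p %| s) -> (W p r s != 0)%R.
Proof.
move=> pp r2 hs; rewrite /W Zm_nat0 ?m_gt1 //; apply/negP.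
rewrite (@pr_split p r r2) -mulnA dvdn_pmul2l ?expn_gt0 ?prime_gt0 // mulnn => h.
have : p %| s ^ 2 by apply: dvdn_trans h; exact: (dvdn_exp2l p (isT : 1 <= 2)).
by rewrite Euclid_dvdX // (negbTE hs).
Qed.

Lemma three (T : finType) (A : {set T}) : 2 < #|A| ->
  exists i1 i2 i3, [/\ i1 \in A, i2 \in A & i3 \in A] /\ [/\ i1 != i2, i1 != i3 & i2 != i3].
Proof.
move=> hA; have : 0 < #|A| by lia.
rewrite card_gt0 => /set0Pn[i1 h1].
have : 0 < #|A :\ i1| by move: (cardsD1 i1 A); rewrite h1 /=; lia.
rewrite card_gt0 => /set0Pn[i2 h2].
have : 0 < #|A :\ i1 :\ i2| by move: (cardsD1 i2 (A :\ i1)) (cardsD1 i1 A); rewrite h1 h2 /=; lia.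
rewrite card_gt0 => /set0Pn[i3]; rewrite !inE => /and3P[n32 n31 h3].
move: h2; rewrite !inE => /andP[n21 h2'].
by exists i1, i2, i3; split; split => //; rewrite eq_sym.
Qed.

Lemma assemble (t p r : nat) (y : 'I_t -> 'Z_(p ^ r)) (i1 i2 i3 : 'I_t) (s1 s2 s3 : nat) :
  prime p -> 2 <= r -> ~~ odd r -> i1 != i2 -> i1 != i3 -> i2 != i3 -> ~~ (p %| s3) ->
  p ^ r %| p ^ (r - 2) * (s1 ^ 2 * (y i1 : nat) + s2 ^ 2 * (y i2 : nat) + s3 ^ 2 * (y i3 : nat)) ->
  has_wzs_subseq (Sqstar (p ^ r)) y.
Proof.
move=> pp r2 er i12 i13 i23 hs3 hd.
pose a := fun i => if i == i1 then W p r s1 else if i == i2 then W p r s2 else W p r s3.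
pose S := i1 |: (i2 |: [set i3]).
exists [set i in S | a i != 0%R]; split.
  apply/set0Pn; exists i3; rewrite !inE eqxx !orbT /= /a (eq_sym i3 i1) (negbTE i13) (eq_sym i3 i2) (negbTE i23).
  exact: W0.
exists a; split.
  move=> i; rewrite inE => /andP[_ nz]; rewrite /Sqstar !inE nz /= /a.
  by case: ifP => _; [|case: ifP => _]; exact: WS.
have -> : (\sum_(i in [set i in S | a i != 0%R]) a i * y i = \sum_(i in S) a i * y i)%R.
  rewrite [RHS](bigID (fun i => a i != 0%R)) /= [X in _ = (_ + X)%R]big1 ?addr0.
    by apply: eq_bigl => i; rewrite inE.
  by move=> i /andP[_]; rewrite negbK => /eqP ->; rewrite mul0r.
rewrite big_setU1 /=; last by rewrite !inE negb_or i12 i13.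
rewrite big_setU1 /=; last by rewrite !inE.
rewrite big_set1 /a eqxx (eq_sym i2 i1) (negbTE i12) eqxx (eq_sym i3 i1) (negbTE i13) (eq_sym i3 i2) (negbTE i23).
rewrite -(natr_Zp (y i1)) -(natr_Zp (y i2)) -(natr_Zp (y i3)) /W.
apply/eqP; rewrite -!natrM -!natrD Zm_nat0 ?m_gt1 //.
move: hd; congr (_ %| _); rewrite !mulnDr !mulnA addnA //.
Qed.

Lemma min_ex (P : nat -> Prop) n : P n -> exists t, P t /\ (forall t', P t' -> t <= t').
Proof.
elim: n {-2}n (leqnn n) => [|N IH] n Hn Pn.
  by exists n; split => // t' _; move: Hn; rewrite leqn0 => /eqP ->.
case: (Classical_Prop.classic (exists t', P t' /\ t' < n)) => [[t' [Pt' lt]]|H].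
  by apply: (IH t') => //; lia.
exists n; split => // t' Pt'; rewrite leqNgt; apply/negP => lt; apply: H; by exists t'.
Qed.

Lemma all5 (p r : nat) : prime p -> odd p -> (2 <= r)%N -> ~~ odd r ->
  all_have_wzs (Sqstar (p ^ r)) 5.
Proof.
move=> pp op r2 er y.
have p1 := prime_gt1 pp.
have pr := @pr_split p r r2.
have P0 : 0 < p ^ (r - 2) by rewrite expn_gt0 prime_gt0.
case: (boolP [exists i, p ^ 2 %| (y i : nat)]) => [/existsP[i hi] | hno].
  exists [set i]; split; first by apply/set0Pn; exists i; rewrite inE.
  exists (fun _ => W p r 1); split.
    by move=> j _; rewrite /Sqstar !inE W0 ?dvdn1 ?neq_ltn ?p1 ?orbT //= WS.
  rewrite big_set1 -(natr_Zp (y i)) /W; apply/eqP; rewrite -natrM Zm_nat0 ?m_gt1 //.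
  have pr2 : p ^ (r - 2) * p ^ 2 = p ^ r by rewrite -mulnn mulnA pr.
  by have := dvdn_mul (dvdnn (p ^ (r - 2))) hi; rewrite pr2 exp1n muln1.
have hn : forall i, ~~ (p ^ 2 %| (y i : nat)).
  by move=> i; apply/negP => h; move/existsP: hno; apply; exists i.
set E := [set i | p %| (y i : nat)].
have : 2 < #|E| \/ 2 < #|~: E|.
  by move: (cardsC E); rewrite card_ord; lia.
case=> /three[i1 [i2 [i3 [[h1 h2 h3] [i12 i13 i23]]]]].
- move: h1 h2 h3; rewrite !inE => h1 h2 h3.
  have hz : forall i, p %| (y i : nat) -> ~~ (p %| (y i : nat) %/ p).
    move=> i hi; apply/negP => h; move/negP: (hn i); apply.
    by rewrite -(divnK hi) -mulnn dvdn_mul.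
  have [s1 [s2 hs]] := core_nat p ((y i1 : nat) %/ p) ((y i2 : nat) %/ p) ((y i3 : nat) %/ p) pp op (hz _ h1) (hz _ h2).
  apply: (@assemble 5 p r y i1 i2 i3 s1 s2 1 pp r2 er i12 i13 i23).
    by rewrite dvdn1 neq_ltn p1 orbT.
  rewrite -(divnK h1) -(divnK h2) -(divnK h3).
  move: hs; move: ((y i1 : nat) %/ p) ((y i2 : nat) %/ p) ((y i3 : nat) %/ p) => z1 z2 z3 /dvdnP[k hk].
  rewrite pr; apply/dvdnP; exists k.
  have e : s1 ^ 2 * (z1 * p) + s2 ^ 2 * (z2 * p) + 1 ^ 2 * (z3 * p) = k * p * p.
    by rewrite exp1n mul1n !mulnA -!mulnDl hk.
  rewrite e; ring.
- move: h1 h2 h3; rewrite !inE => h1 h2 h3.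
  have [s1 [s2 /dvdnP[k hk]]] := core_nat p (y i1 : nat) (y i2 : nat) (y i3 : nat) pp op h1 h2.
  have h23 : ~~ (p %| 2 * (y i3 : nat)).
    rewrite Euclid_dvdM // negb_or h3 andbT; apply/negP => /(dvdn_leq (isT : 0 < 2)) h.
    have e : p = 2 by lia.
    by rewrite e in op.
  have [c /dvdnP[q hq]] := lift_nat p k _ pp h23.
  apply: (@assemble 5 p r y i1 i2 i3 s1 s2 (1 + p * c) pp r2 er i12 i13 i23).
    by rewrite (dvdn_addl _ (dvdn_mulr c (dvdnn p))) dvdn1 neq_ltn p1 orbT.
  move: hk hq; move: (y i1 : nat) (y i2 : nat) (y i3 : nat) => n1 n2 n3 hk hq.
  rewrite pr; apply/dvdnP; exists (q + c ^ 2 * n3).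
  have e : s1 ^ 2 * n1 + s2 ^ 2 * n2 + (1 + p * c) ^ 2 * n3 = (q + c ^ 2 * n3) * (p * p) by clear -hk hq; nia.
  rewrite e; ring.
Qed.

Theorem mainTheorem14 (p r : nat) :
  prime p -> odd p -> (2 <= r)%N -> ~~ odd r ->
  exists t : nat, is_DA (Sqstar (p ^ r)) t /\ (t <= 5)%N.
Proof.
move=> pp op r2 er.
have a5 := all5 p r pp op r2 er.
have [t [[t0 at'] mint]] := @min_ex (fun t => 0 < t /\ all_have_wzs (Sqstar (p ^ r)) t) 5 (conj isT a5).
exists t; split; last exact: mint.
by split => //; split => // t' h1 h2; apply: mint.
Qed.
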